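(* Let $\phi$ be a formula of $\mathsf{BSML}$ extended with both $\sqcup$ and $\oslash$. If $\phi$ does not contain $\mathrm{NE}$, then $\phi$ is downward closed and has the empty state property. If $\phi$ does not contain $\sqcup$, then $\phi$ is union closed. In particular, all formulas of $\mathsf{BSML}$ and of $\mathsf{BSML}^{\oslash}$ are union closed, and all formulas of $\mathsf{ML}$ are flat.
   Context: Formulas are generated by $\phi ::= p \mid \neg\phi \mid (\phi\wedge\phi) \mid (\phi\vee\phi) \mid \Diamond\phi \mid \mathrm{NE}\mid \phi\sqcup\phi\mid\oslash\phi$; $\mathsf{BSML}$ is the fragment without $\sqcup,\oslash$, $\mathsf{BSML}^{\oslash}$ the fragment without $\sqcup$, and $\mathsf{ML}$ the $\mathrm{NE}$-free fragment of $\mathsf{BSML}$. Models $M=(W,R,V)$ are Kripke models; a state is a subset $s\subseteq W$; $R[w]=\{v:wRv\}$. Support $\models$ and anti-support $\dashv$: $s\models p$ iff $s\subseteq V(p)$; $s\dashv p$ iff $s\cap V(p)=\emptyset$; $s\models\mathrm{NE}$ iff $s\neq\emptyset$; $s\dashv\mathrm{NE}$ iff $s=\emptyset$; $s\models\neg\phi$ iff $s\dashv\phi$; $s\dashv\neg\phi$ iff $s\models\phi$; $s\models\phi\wedge\psi$ iff both; $s\dashv\phi\wedge\psi$ iff $s=t\cup u$ with $t\dashv\phi,u\dashv\psi$; $s\models\phi\vee\psi$ iff $s=t\cup u$ with $t\models\phi,u\models\psi$; $s\dashv\phi\vee\psi$ iff $s\dashv\phi$ and $s\dashv\psi$; $s\models\phi\sqcup\psi$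 iff $s\models\phi$ or $s\models\psi$; $s\dashv\phi\sqcup\psi$ iff $s\dashv\phi$ and $s\dashv\psi$; $s\models\Diamond\phi$ iff every $w\in s$ has a nonempty $t\subseteq R[w]$ with $t\models\phi$; $s\dashv\Diamond\phi$ iff $R[w]\dashv\phi$ for all $w\in s$; $s\models\oslash\phi$ iff $s\models\phi$ or $s=\emptyset$; $s\dashv\oslash\phi$ iff $s\dashv\phi$. A formula $\phi$ is downward closed if $M,s\models\phi$ and $t\subseteq s$ imply $M,t\models\phi$; union closed if $M,s\models\phi$ for all $s$ in a nonempty set $S$ of states implies $M,\bigcup S\models\phi$; has the empty state property if $M,\emptyset\models\phi$ for every $M$; flat if $M,s\models\phi$ iff $M,\{w\}\models\phi$ for all $w\in s$. *)

(* Defs.v *)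
Inductive form : Type :=
| Atom : nat -> form
| Neg : form -> form
| And : form -> form -> form
| Or : form -> form -> form
| Dia : form -> form
| NE : form
| GOr : form -> form -> form
| Empt : form -> form.

Record model : Type := Model {
  world : Type;
  rel : world -> world -> Prop;
  val : nat -> world -> Prop
}.

Definition state (M : model) := world M -> Prop.

Definition subset {M : model} (t s : state M) : Prop := forall w, t w -> s w.
Definition is_union2 {M : model} (s t u : state M) : Prop :=
  forall w, s w <-> (t w \/ u w).
Definition nonempty {M : model} (s : state M) : Prop := exists w, s w.
Definition empty {M : model} (s : state M) : Prop := forall w, ~ s w.
Definition succs {M : model} (w : world M) : state M := fun v => rel M w v.
Definition singleton {M : model} (w : world M) : state M := fun v => v = w.

Fixpoint supp (M : model) (s : state M) (phi : form) {struct phi} : Prop :=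
  match phi with
  | Atom p => forall w, s w -> val M p w
  | Neg a => anti M s a
  | And a b => supp M s a /\ supp M s b
  | Or a b => exists t u, is_union2 s t u /\ supp M t a /\ supp M u b
  | Dia a => forall w, s w ->
       exists t, nonempty t /\ subset t (succs w) /\ supp M t a
  | NE => nonempty s
  | GOr a b => supp M s a \/ supp M s b
  | Empt a => supp M s a \/ empty s
  end
with anti (M : model) (s : state M) (phi : form) {struct phi} : Prop :=
  match phi with
  | Atom p => forall w, s w -> ~ val M p w
  | Neg a => supp M s a
  | And a b => exists t u, is_union2 s t u /\ anti M t a /\ anti M u b
  | Or a b => anti M s a /\ anti M s b
  | Dia a => forall w, s w -> anti M (succs w) a
  | NE => empty s
  | GOr a b => anti M s a /\ anti M s b
  | Empt a => anti M s a
  end.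

Fixpoint has_NE (phi : form) : bool :=
  match phi with
  | Atom _ => false
  | NE => true
  | Neg a | Dia a | Empt a => has_NE a
  | And a b | Or a b | GOr a b => has_NE a || has_NE b
  end.

Fixpoint has_GOr (phi : form) : bool :=
  match phi with
  | Atom _ | NE => false
  | Neg a | Dia a | Empt a => has_GOr a
  | And a b | Or a b => has_GOr a || has_GOr b
  | GOr _ _ => true
  end.

Fixpoint has_Empt (phi : form) : bool :=
  match phi with
  | Atom _ | NE => false
  | Neg a | Dia a => has_Empt a
  | And a b | Or a b | GOr a b => has_Empt a || has_Empt b
  | Empt _ => true
  end.

Definition in_BSML (phi : form) : Prop := has_GOr phi = false /\ has_Empt phi = false.
Definition in_BSMLo (phi : form) : Prop := has_GOr phi = false.
Definition in_ML (phi : form) : Prop := in_BSML phi /\ has_NE phi = false.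

Definition downward_closed (phi : form) : Prop :=
  forall (M : model) (s t : state M), supp M s phi -> subset t s -> supp M t phi.

Definition union_closed (phi : form) : Prop :=
  forall (M : model) (S : state M -> Prop),
    (exists s, S s) ->
    (forall s, S s -> supp M s phi) ->
    supp M (fun w => exists s, S s /\ s w) phi.

Definition empty_state_property (phi : form) : Prop :=
  forall (M : model), supp M (fun _ => False) phi.

Definition flat (phi : form) : Prop :=
  forall (M : model) (s : state M),
    supp M s phi <-> (forall w, s w -> supp M (singleton w) phi).

(* Main.v *)
Require Import Defs.
From Stdlib Require Import Classical FunctionalExtensionality PropExtensionality Bool.

Lemma stext {M : model} (s t : state M) : (forall w, s w <-> t w) -> s = t.
Proof. intro H. apply functional_extensionality; intro w. apply propositional_extensionality. apply H. Qed.

Lemma dc_all phi : has_NE phi = false -> forall M,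
  (forall s t, supp M s phi -> subset t s -> supp M t phi) /\
  (forall s t, anti M s phi -> subset t s -> anti M t phi).
Proof.
  induction phi; simpl; intros Hn M;
    repeat match goal with H : (_ || _) = false |- _ => apply orb_false_iff in H; destruct H end;
    unfold subset in *.
  - split; intros s t H Hs w Hw; apply H, Hs, Hw.
  - destruct (IHphi Hn M) as [A B]. split; intros; eauto.
  - destruct (IHphi1 H M) as [A1 B1]; destruct (IHphi2 H0 M) as [A2 B2]. split.
    + intros s t [H1 H2] Hs; split; eauto.
    + intros s t [t1 [u1 [U [H1 H2]]]] Hs.
      exists (fun w => t1 w /\ t w), (fun w => u1 w /\ t w). repeat split.
      * intros Hw. destruct (proj1 (U w) (Hs w Hw)); tauto.
      * intros [[? ?]|[? ?]]; auto.
      * apply (B1 t1); auto; intros w [? ?]; auto.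
      * apply (B2 u1); auto; intros w [? ?]; auto.
  - destruct (IHphi1 H M) as [A1 B1]; destruct (IHphi2 H0 M) as [A2 B2]. split.
    + intros s t [t1 [u1 [U [H1 H2]]]] Hs.
      exists (fun w => t1 w /\ t w), (fun w => u1 w /\ t w). repeat split.
      * intros Hw. destruct (proj1 (U w) (Hs w Hw)); tauto.
      * intros [[? ?]|[? ?]]; auto.
      * apply (A1 t1); auto; intros w [? ?]; auto.
      * apply (A2 u1); auto; intros w [? ?]; auto.
    + intros s t [H1 H2] Hs; split; eauto.
  - split; intros s t H Hs w Hw; apply H, Hs, Hw.
  - discriminate.
  - destruct (IHphi1 H M) as [A1 B1]; destruct (IHphi2 H0 M) as [A2 B2]. split.
    + intros s t [H1|H1] Hs; [left|right]; eauto.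
    + intros s t [H1 H2] Hs; split; eauto.
  - destruct (IHphi Hn M) as [A B]. split.
    + intros s t [H1|H1] Hs; [left; eauto|right]. intros w Hw; apply (H1 w), Hs, Hw.
    + eauto.
Qed.

Lemma esp_all phi : has_NE phi = false -> forall M,
  supp M (fun _ => False) phi /\ anti M (fun _ => False) phi.
Proof.
  induction phi; simpl; intros Hn M;
    repeat match goal with H : (_ || _) = false |- _ => apply orb_false_iff in H; destruct H end.
  - split; intros; contradiction.
  - destruct (IHphi Hn M); split; auto.
  - destruct (IHphi1 H M), (IHphi2 H0 M). split; [split; auto|].
    exists (fun _ => False), (fun _ => False). split; [|auto]. intro w; tauto.
  - destruct (IHphi1 H M), (IHphi2 H0 M). split; [|split; auto].
    exists (fun _ => False), (fun _ => False). split; [|auto]. intro w; tauto.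
  - split; intros; contradiction.
  - discriminate.
  - destruct (IHphi1 H M), (IHphi2 H0 M). split; auto.
  - destruct (IHphi Hn M). split; auto.
Qed.

Definition U {M : model} (S : state M -> Prop) : state M := fun w => exists s, S s /\ s w.

Lemma uc_all phi : has_GOr phi = false -> forall M (S : state M -> Prop), (exists s, S s) ->
  ((forall s, S s -> supp M s phi) -> supp M (U S) phi) /\
  ((forall s, S s -> anti M s phi) -> anti M (U S) phi).
Proof.
  induction phi; simpl; intros Hn M S HS;
    repeat match goal with H : (_ || _) = false |- _ => apply orb_false_iff in H; destruct H end;
    unfold U.
  - split; intros H w [s [Hs Hw]]; exact (H s Hs w Hw).
  - destruct (IHphi Hn M S HS); split; auto.
  - split.
    + intros H1; split; [apply (proj1 (IHphi1 H M S HS))|apply (proj1 (IHphi2 H0 M S HS))];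
      intros s Hs; apply H1; auto.
    + intros H1.
      set (S1 := fun t => exists s u, S s /\ is_union2 s t u /\ anti M t phi1 /\ anti M u phi2).
      set (S2 := fun u => exists s t, S s /\ is_union2 s t u /\ anti M t phi1 /\ anti M u phi2).
      destruct HS as [s0 Hs0]. destruct (H1 s0 Hs0) as [t0 [u0 [Hu0 [Ht0 Hv0]]]].
      exists (U S1), (U S2). split; [|split].
      * intro w; split.
        -- intros [s [Hs Hw]]. destruct (H1 s Hs) as [t [u [Hu [Ht Hv]]]].
           destruct (proj1 (Hu w) Hw); [left; exists t; split; auto; exists s, u; auto
                                      |right; exists u; split; auto; exists s, t; auto].
        -- intros [[t [[s [u [Hs [Hu _]]]] Hw]]|[u [[s [t [Hs [Hu _]]]] Hw]]];
           exists s; split; auto; apply Hu; auto.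
      * apply (proj2 (IHphi1 H M S1 (ex_intro _ t0 (ex_intro _ s0 (ex_intro _ u0 (conj Hs0 (conj Hu0 (conj Ht0 Hv0)))))))).
        intros t [s [u [_ [_ [? _]]]]]; auto.
      * apply (proj2 (IHphi2 H0 M S2 (ex_intro _ u0 (ex_intro _ s0 (ex_intro _ t0 (conj Hs0 (conj Hu0 (conj Ht0 Hv0)))))))).
        intros u [s [t [_ [_ [_ ?]]]]]; auto.
  - split.
    + intros H1.
      set (S1 := fun t => exists s u, S s /\ is_union2 s t u /\ supp M t phi1 /\ supp M u phi2).
      set (S2 := fun u => exists s t, S s /\ is_union2 s t u /\ supp M t phi1 /\ supp M u phi2).
      destruct HS as [s0 Hs0]. destruct (H1 s0 Hs0) as [t0 [u0 [Hu0 [Ht0 Hv0]]]].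
      exists (U S1), (U S2). split; [|split].
      * intro w; split.
        -- intros [s [Hs Hw]]. destruct (H1 s Hs) as [t [u [Hu [Ht Hv]]]].
           destruct (proj1 (Hu w) Hw); [left; exists t; split; auto; exists s, u; auto
                                      |right; exists u; split; auto; exists s, t; auto].
        -- intros [[t [[s [u [Hs [Hu _]]]] Hw]]|[u [[s [t [Hs [Hu _]]]] Hw]]];
           exists s; split; auto; apply Hu; auto.
      * apply (proj1 (IHphi1 H M S1 (ex_intro _ t0 (ex_intro _ s0 (ex_intro _ u0 (conj Hs0 (conj Hu0 (conj Ht0 Hv0)))))))).
        intros t [s [u [_ [_ [? _]]]]]; auto.
      * apply (proj1 (IHphi2 H0 M S2 (ex_intro _ u0 (ex_intro _ s0 (ex_intro _ t0 (conj Hs0 (conj Hu0 (conj Ht0 Hv0)))))))).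
        intros u [s [t [_ [_ [_ ?]]]]]; auto.
    + intros H1; split; [apply (proj2 (IHphi1 H M S HS))|apply (proj2 (IHphi2 H0 M S HS))];
      intros s Hs; apply H1; auto.
  - split; intros H w [s [Hs Hw]]; exact (H s Hs w Hw).
  - split.
    + intros H. destruct HS as [s Hs]. destruct (H s Hs) as [w Hw]. exists w, s; auto.
    + intros H w [s [Hs Hw]]. exact (H s Hs w Hw).
  - discriminate.
  - split.
    + intros H1.
      destruct (classic (exists s, S s /\ supp M s phi)) as [[s0 [Hs0 Hp0]]|Hno].
      * left.
        assert (E : (fun w => exists s, S s /\ s w) = U (fun s => S s /\ supp M s phi)).
        { apply stext; intro w; unfold U; split.
          - intros [s [Hs Hw]]. exists s. destruct (H1 s Hs) as [Hp|He].
            + auto.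
            + exfalso; exact (He w Hw).
          - intros [s [[Hs _] Hw]]; eauto. }
        rewrite E. apply (proj1 (IHphi Hn M _ (ex_intro _ s0 (conj Hs0 Hp0)))).
        intros s [_ ?]; auto.
      * right. intros w [s [Hs Hw]]. destruct (H1 s Hs) as [Hp|He].
        -- apply Hno; eauto.
        -- exact (He w Hw).
    + apply (proj2 (IHphi Hn M S HS)).
Qed.

Theorem fact2p7 :
  (forall phi : form, has_NE phi = false ->
     downward_closed phi /\ empty_state_property phi) /\
  (forall phi : form, has_GOr phi = false -> union_closed phi) /\
  (forall phi : form, in_BSML phi -> union_closed phi) /\
  (forall phi : form, in_BSMLo phi -> union_closed phi) /\
  (forall phi : form, in_ML phi -> flat phi).
Proof.
  assert (UC : forall phi, has_GOr phi = false -> union_closed phi).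
  { intros phi H M S HS HA. apply (proj1 (uc_all phi H M S HS)); auto. }
  split; [|split; [exact UC|split; [|split]]].
  - intros phi H; split.
    + intros M s t; apply (proj1 (dc_all phi H M)).
    + intro M; apply (proj1 (esp_all phi H M)).
  - intros phi [H _]; auto.
  - intros phi H; auto.
  - intros phi [[HG _] HN] M s. split.
    + intros H w Hw. apply (proj1 (dc_all phi HN M) s); auto.
      intros v Hv; unfold singleton in Hv; subst; auto.
    + intros H.
      destruct (classic (exists w, s w)) as [[w0 Hw0]|Hno].
      * assert (E : s = U (fun t => exists w, s w /\ t = singleton w)).
        { apply stext; intro w; unfold U, singleton; split.
          - intros Hw. exists (fun v => v = w). split; eauto.
          - intros [t [[v [Hv ->]] ->]]; auto. }
        rewrite E. apply (UC phi HG M).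
        -- exists (singleton w0); eauto.
        -- intros t [w [Hw ->]]; auto.
      * assert (E : s = (fun _ => False)).
        { apply stext; intro w; split; [intro Hw; apply Hno; eauto|tauto]. }
        rewrite E. apply (proj1 (esp_all phi HN M)).
Qed.
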